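(* Every Lindelöf space is selectively star-ccc. More generally, for each $k\in\mathbb{N}^+$, every $k$-star-Lindelöf space is selectively $(k+1)$-star-ccc.
   Context: No separation axioms are assumed; $\mathbb{N}^+$ is the set of positive integers. For $B\subseteq X$ and a family $\mathcal{U}$ of subsets of $X$: $\operatorname{st}^1(B,\mathcal{U})=\bigcup\{U\in\mathcal{U}:U\cap B\neq\emptyset\}$ and $\operatorname{st}^{n+1}(B,\mathcal{U})=\bigcup\{U\in\mathcal{U}:U\cap\operatorname{st}^n(B,\mathcal{U})\neq\emptyset\}$. A space $X$ is $k$-star-Lindelöf if for every open cover $\mathcal{U}$ there is a countable $\mathcal{V}\subseteq\mathcal{U}$ with $\operatorname{st}^k(\bigcup\mathcal{V},\mathcal{U})=X$. A space $X$ is selectively $k$-star-ccc if for every open cover $\mathcal{U}$ of $X$ and every sequence $(\mathcal{A}_n:n\in\omega)$ of maximal pairwise disjoint families of open subsets of $X$, there is a sequence $(A_n\in\mathcal{A}_n:n\in\omega)$ with $\operatorname{st}^k(\bigcup_{n\in\omega}A_n,\mathcal{U})=X$; selectively star-ccc means selectively $1$-star-ccc. *)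

(* Defs.v *)
From HB Require Import structures.
From mathcomp Require Import all_boot all_order.
From mathcomp Require Import all_classical.
From mathcomp Require Import topology.

Set Implicit Arguments.
Unset Strict Implicit.
Unset Printing Implicit Defensive.

Local Open Scope classical_set_scope.

Section StarDefs.
Variable T : topologicalType.

Definition open_cover (U : set (set T)) : Prop :=
  (forall u, U u -> open u) /\ \bigcup_(u in U) u = setT.

Definition st1 (B : set T) (U : set (set T)) : set T :=
  \bigcup_(u in [set u | U u /\ u `&` B !=set0]) u.

Fixpoint stn (n : nat) (B : set T) (U : set (set T)) : set T :=
  match n with
  | 0 => B
  | n'.+1 => st1 (stn n' B U) U
  end.

Definition Lindelof : Prop :=
  forall U, open_cover U ->
    exists V : set (set T), [/\ V `<=` U, countable V & \bigcup_(v in V) v = setT].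

Definition k_star_Lindelof (k : nat) : Prop :=
  forall U, open_cover U ->
    exists V : set (set T),
      [/\ V `<=` U, countable V & stn k (\bigcup_(v in V) v) U = setT].

Definition open_pdisj (A : set (set T)) : Prop :=
  (forall a, A a -> open a) /\
  (forall a b, A a -> A b -> a <> b -> a `&` b = set0).

Definition maximal_open_pdisj (A : set (set T)) : Prop :=
  open_pdisj A /\ (forall A', open_pdisj A' -> A `<=` A' -> A' = A).

Definition selectively_k_star_ccc (k : nat) : Prop :=
  forall (U : set (set T)) (A : nat -> set (set T)),
    open_cover U -> (forall n, maximal_open_pdisj (A n)) ->
    exists a : nat -> set T,
      (forall n, A n (a n)) /\ stn k (\bigcup_n a n) U = setT.

End StarDefs.

(* Main.v *)
Require Import Defs.
From mathcomp Require Import all_boot all_classical topology.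

Local Open Scope classical_set_scope.

Section Aux.
Variable T : topologicalType.

Lemma st1_mono (B C : set T) U : B `<=` C -> st1 B U `<=` st1 C U.
Proof.
move=> BC x [u [Uu [y [uy By]]] ux]; exists u => //; split => //.
by exists y; split => //; apply: BC.
Qed.

Lemma stn_mono n (B C : set T) U : B `<=` C -> stn n B U `<=` stn n C U.
Proof. by elim: n => [|n IH] //= BC; apply: st1_mono; apply: IH. Qed.

Lemma stn_st1 n (B : set T) U : stn n (st1 B U) U = stn n.+1 B U.
Proof. by elim: n => [|n IH] //=; rewrite IH. Qed.

Lemma mpd_nonempty (A : set (set T)) : maximal_open_pdisj A -> exists a, A a.
Proof.
move=> [_ H]; apply: contrapT => nA.
have : [set (@set0 T)] = A.
  apply: H.
  - split; first by move=> a -> ; exact: open0.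
    by move=> a b -> ->.
  - by move=> a Aa; exfalso; apply: nA; exists a.
move=> eA; apply: nA; exists set0; rewrite -eA; done.
Qed.

Lemma mpd_dense (A : set (set T)) (W : set T) : maximal_open_pdisj A -> open W ->
  W !=set0 -> exists a, A a /\ a `&` W !=set0.
Proof.
move=> [[oA dA] H] oW [w Ww]; apply: contrapT => nA.
have dis : forall a, A a -> a `&` W = set0.
  move=> a Aa; apply/eqP/negPn/negP => /set0P ne; apply: nA; by exists a.
have : A `|` [set W] = A.
  apply: H; last by move=> a Aa; left.
  split.
  - by move=> a [Aa|->]; [apply: oA|].
  - move=> a b [Aa|->] [Ab|->] ab //.
    + exact: dA.
    + exact: dis.
    + by rewrite setIC; apply: dis.
move=> eA.
have AW : A W by rewrite -eA; right.
by apply: nA; exists W; split => //; exists w.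
Qed.

Lemma gen_thm k : (forall U, open_cover U ->
    exists V : set (set T),
      [/\ V `<=` U, countable V & stn k (\bigcup_(v in V) v) U = setT]) ->
  selectively_k_star_ccc T k.+1.
Proof.
move=> HL U A cU mA.
have [V [VU cV eV]] := HL U cU.
have [f finj] := countable_injP _ cV.
have exa : forall n, exists a, A n a /\
    (forall v, V v -> f v = n -> v !=set0 -> a `&` v !=set0).
  move=> n.
  case: (pselect (exists v, [/\ V v, f v = n & v !=set0])).
  - move=> [v0 [Vv0 fv0 ne0]].
    have [a [Aa ne]] := @mpd_dense (A n) v0 (mA n) (cU.1 _ (VU _ Vv0)) ne0.
    exists a; split => // v Vv fv _.
    have -> : v = v0 by apply: finj; rewrite ?inE // fv fv0.
    done.
  - move=> nex; have [a Aa] := @mpd_nonempty (A n) (mA n).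
    exists a; split => // v Vv fv nev; exfalso; apply: nex; by exists v.
have [a Ha] := choice exa.
exists a; split; first by move=> n; exact: (Ha n).1.
rewrite eqEsubset; split => // x _.
rewrite -stn_st1.
have : stn k (\bigcup_(v in V) v) U x by rewrite eV.
apply: stn_mono => y [v Vv vy].
have [z [az vz]] := (Ha (f v)).2 v Vv erefl (ex_intro _ y vy).
exists v => //; split; first exact: VU.
exists z; split => //; exists (f v) => //.
Qed.

End Aux.

Theorem theorem3 (T : topologicalType) :
  (Lindelof T -> selectively_k_star_ccc T 1) /\
  (forall k : nat, (0 < k)%N -> k_star_Lindelof T k ->
     selectively_k_star_ccc T k.+1).
Proof.
split.
- move=> HL; apply: (@gen_thm T 0) => U cU.
  have [V [VU cV eV]] := HL U cU; by exists V; split.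
- move=> k _ HL; exact: gen_thm.
Qed.
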